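(* Let $d\geq 1$ be an integer and let $e_0,\dots,e_{d-1}$ be the standard basis of $\mathbb{C}^d$; write $\mathcal{B}^0=\{e_0,\dots,e_{d-1}\}$. Let $(p_n)_{n=0}^\infty$ be a sequence of orthogonal polynomials, i.e. each $p_n$ is a real polynomial of degree exactly $n$ and there is a positive weight function $w$ on $\mathbb{R}$ with $\int_{-\infty}^{\infty}p_j(x)p_i(x)w(x)\,dx=\delta_{ij}$ for all $i,j$. Let $x_0,\dots,x_{d-1}$ be the (real, distinct) zeros of $p_d$ and $y_0,\dots,y_{d-2}$ the (real, distinct) zeros of $p_{d-1}$ (there are none if $d=1$). Fix $\alpha\in\mathbb{R}$ such that $e^{ij\alpha}\notin\mathbb{R}$ for all $j\in\{1,\dots,d-1\}$. For $j=0,\dots,d-1$ define $$v^1_j=\big(p_0(x_j),p_1(x_j),\dots,p_{d-1}(x_j)\big),\qquad v^2_j=\big(p_0(x_j),e^{i\alpha}p_1(x_j),\dots,e^{i(d-1)\alpha}p_{d-1}(x_j)\big),$$ for $j=0,\dots,d-2$ define $$v^3_j=\big(p_0(y_j),p_1(y_j),\dots,p_{d-2}(y_j),0\big),\qquad v^4_j=\big(p_0(y_j),e^{i\alpha}p_1(y_j),\dots,e^{i(d-2)\alpha}p_{d-2}(y_j),0\big),$$ and set $v^3_{d-1}=v^4_{d-1}=e_{d-1}$. For $\ell=1,2,3,4$ let $\mathcal{B}^\ell=\{v^\ell_j/\|v^\ell_j\| : j=0,\dots,d-1\}$ (these are orthonormal bases of $\mathbb{C}^d$). Then the five orthonormal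 bases $\mathcal{B}^0,\dots,\mathcal{B}^4$ determine any pure state among all states: for every unit vector $\psi\in\mathbb{C}^d$ and every density matrix $\varrho$ on $\mathbb{C}^d$, if $|\langle v\mid\psi\rangle|^2=\langle v\mid \varrho\, v\rangle$ for every $v\in\mathcal{B}^0\cup\mathcal{B}^1\cup\mathcal{B}^2\cup\mathcal{B}^3\cup\mathcal{B}^4$, then $\varrho=|\psi\rangle\langle\psi|$.
   Context: A density matrix (state) is a positive semidefinite $d\times d$ complex matrix of trace one; a pure state is one of the form $|\psi\rangle\langle\psi|$ with $\psi$ a unit vector. The inner product $\langle\cdot\mid\cdot\rangle$ on $\mathbb{C}^d$ is linear in the second argument. *)

(* Defs.v *)
From HB Require Import structures.
From mathcomp Require Import all_boot all_order all_algebra.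
From mathcomp Require Import all_classical all_reals all_analysis.
From mathcomp.real_closed Require Import complex.

Set Implicit Arguments.
Unset Strict Implicit.
Unset Printing Implicit Defensive.

Import Order.TTheory GRing.Theory Num.Theory.
Local Open Scope ring_scope.

Section Defs.
Variable R : realType.
Local Notation C := (R[i]).

Definition orthonormal_polys (p : nat -> {poly R}) : Prop :=
  (forall n, size (p n) = n.+1) /\
  exists w : R -> R,
    (forall x, 0 < w x) /\
    (forall i j : nat,
       (@lebesgue_measure R).-integrable [set: R]
          (fun x => ((p j).[x] * (p i).[x] * w x)%:E) /\
       (\int[@lebesgue_measure R]_(x in [set: R])
          ((p j).[x] * (p i).[x] * w x)%:E = ((i == j)%:R)%:E)%E).

Definition rC (r : R) : C := Complex r 0.

Definition eia (alpha : R) (k : nat) : C :=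
  Complex (cos (k%:R * alpha)) (sin (k%:R * alpha)).

(** inner product on C^d, linear in the second argument *)
Definition inner d (u v : 'cV[C]_d) : C := \sum_(k < d) (u k 0)^* * v k 0.

Definition vnorm d (v : 'cV[C]_d) : C := sqrtC (\sum_(k < d) `|v k 0| ^+ 2).

Definition normalize d (v : 'cV[C]_d) : 'cV[C]_d := (vnorm v)^-1 *: v.

Definition adj m n (A : 'M[C]_(m, n)) : 'M[C]_(n, m) := (map_mx Num.conj A)^T.

Definition density_matrix d (rho : 'M[C]_d) : Prop :=
  adj rho = rho /\ (forall v : 'cV[C]_d, 0 <= inner v (rho *m v)) /\ \tr rho = 1.

Definition pure_state d (psi : 'cV[C]_d) : 'M[C]_d := psi *m adj psi.

Definition e_vec d (j : nat) : 'cV[C]_d := \col_(k < d) (k == j :> nat)%:R.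

(** v^1_j and v^2_j; x is the enumeration of the zeros of p_d *)
Definition v1 d (p : nat -> {poly R}) (x : nat -> R) (j : nat) : 'cV[C]_d :=
  \col_(k < d) rC (p k).[x j].
Definition v2 d (p : nat -> {poly R}) (alpha : R) (x : nat -> R) (j : nat)
  : 'cV[C]_d :=
  \col_(k < d) (eia alpha k * rC (p k).[x j]).

(** v^3_j and v^4_j; y is the enumeration of the zeros of p_{d-1};
    v^3_{d-1} = v^4_{d-1} = e_{d-1} *)
Definition v3 d (p : nat -> {poly R}) (y : nat -> R) (j : nat) : 'cV[C]_d :=
  if (j < d.-1)%N then
    \col_(k < d) (if (k < d.-1)%N then rC (p k).[y j] else 0)
  else e_vec d d.-1.
Definition v4 d (p : nat -> {poly R}) (alpha : R) (y : nat -> R) (j : nat)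
  : 'cV[C]_d :=
  if (j < d.-1)%N then
    \col_(k < d) (if (k < d.-1)%N then eia alpha k * rC (p k).[y j] else 0)
  else e_vec d d.-1.

End Defs.
Arguments e_vec {R} d j.

(* Main.v *)
Require Import Defs.
From HB Require Import structures.
From mathcomp Require Import all_boot all_order all_algebra.
From mathcomp Require Import all_classical all_reals all_analysis.
From mathcomp.real_closed Require Import complex.
From mathcomp Require Import ring lra zify.
From Stdlib Require Import Lia.
Import Order.TTheory GRing.Theory Num.Theory.
Local Open Scope ring_scope.

Set Implicit Arguments.
Unset Strict Implicit.
Unset Printing Implicit Defensive.

Lemma rC_real (R : realType) (r : R) : rC r = (r%:C)%C.
Proof. by []. Qed.

Lemma rCM (R : realType) (a b : R) : rC (a * b) = rC a * rC b.
Proof. by rewrite !rC_real rmorphM. Qed.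
Lemma rCD (R : realType) (a b : R) : rC (a + b) = rC a + rC b.
Proof. by rewrite !rC_real rmorphD. Qed.
Lemma rC0 (R : realType) : rC (0 : R) = 0.
Proof. by []. Qed.
Lemma rC_conj (R : realType) (r : R) : (rC r)^* = rC r.
Proof. by rewrite /rC /=; apply/eqP; rewrite eq_complex /= oppr0 !eqxx. Qed.
Lemma rC_eq0 (R : realType) (r : R) : (rC r == 0) = (r == 0).
Proof. by rewrite /rC eq_complex /= eqxx andbT. Qed.

Lemma innerDr (R : realType) d (u v w : 'cV[R[i]]_d) :
  inner u (v + w) = inner u v + inner u w.
Proof. by rewrite /inner -big_split /=; apply: eq_bigr => k _; rewrite mxE mulrDr. Qed.
Lemma innerNr (R : realType) d (u v : 'cV[R[i]]_d) :
  inner u (- v) = - inner u v.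
Proof. by rewrite /inner -sumrN; apply: eq_bigr => k _; rewrite mxE mulrN. Qed.
Lemma innerBr (R : realType) d (u v w : 'cV[R[i]]_d) :
  inner u (v - w) = inner u v - inner u w.
Proof. by rewrite innerDr innerNr. Qed.
Lemma innerZr (R : realType) d (u v : 'cV[R[i]]_d) c :
  inner u (c *: v) = c * inner u v.
Proof. by rewrite /inner mulr_sumr; apply: eq_bigr => k _; rewrite mxE mulrCA. Qed.
Lemma innerDl (R : realType) d (u v w : 'cV[R[i]]_d) :
  inner (u + v) w = inner u w + inner v w.
Proof. by rewrite /inner -big_split /=; apply: eq_bigr => k _; rewrite mxE rmorphD mulrDl. Qed.
Lemma innerNl (R : realType) d (u v : 'cV[R[i]]_d) :
  inner (- u) v = - inner u v.
Proof. by rewrite /inner -sumrN; apply: eq_bigr => k _; rewrite mxE rmorphN mulNr. Qed.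
Lemma innerZl (R : realType) d (u v : 'cV[R[i]]_d) c :
  inner (c *: u) v = c^* * inner u v.
Proof. by rewrite /inner mulr_sumr; apply: eq_bigr => k _; rewrite mxE rmorphM mulrA. Qed.

Lemma innerBl (R : realType) d (u v w : 'cV[R[i]]_d) :
  inner (u - v) w = inner u w - inner v w.
Proof. by rewrite innerDl innerNl. Qed.

Lemma inner_conj (R : realType) d (M : 'M[R[i]]_d) (v w : 'cV[R[i]]_d) :
  adj M = M -> inner v (M *m w) = (inner w (M *m v))^*.
Proof.
move=> hM; rewrite /inner rmorph_sum /=.
under eq_bigr => k _ do rewrite mxE mulr_sumr.
under [RHS]eq_bigr => k _ do rewrite mxE mulr_sumr rmorph_sum.
rewrite exchange_big /=; apply: eq_bigr => k _; apply: eq_bigr => l _.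
have -> : M k l = (M l k)^* by rewrite -{1}hM !mxE.
by rewrite !rmorphM /= !conjCK; ring.
Qed.

Lemma inner_self_ge0 (R : realType) d (w : 'cV[R[i]]_d) : 0 <= inner w w.
Proof. by rewrite /inner sumr_ge0 // => k _; rewrite -normCKC exprn_ge0. Qed.

Lemma inner_self_eq0 (R : realType) d (w : 'cV[R[i]]_d) : inner w w = 0 -> w = 0.
Proof.
move=> h; apply/matrixP => k l; rewrite (ord1 l) mxE.
have /psumr_eq0P H : forall i : 'I_d, true -> 0 <= (w i 0)^* * w i 0.
  by move=> i _; rewrite -normCKC exprn_ge0.
move/eqP: (H h k isT); rewrite mulf_eq0 conjC_eq0 => /orP[] /eqP //.
Qed.

Lemma psd_kernel (R : realType) d (M : 'M[R[i]]_d) (v : 'cV[R[i]]_d) :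
  adj M = M -> (forall u, 0 <= inner u (M *m u)) ->
  inner v (M *m v) = 0 -> M *m v = 0.
Proof.
move=> hM hpos hv; set w := M *m v.
have ha := inner_self_ge0 w; have hb := hpos w.
have [a [a0 ea]] : exists a : R, 0 <= a /\ inner w w = rC a.
  exists (complex.Re (inner w w)); split; last first.
    by rewrite /rC [in LHS](complexE (inner w w)) (ger0_Im ha) mulr0 addr0.
  by move: (ha); rewrite [X in 0 <= X](complexE (inner w w)) (ger0_Im ha) mulr0 addr0 ler0c.
have [b [b0 eb]] : exists b : R, 0 <= b /\ inner w (M *m w) = rC b.
  exists (complex.Re (inner w (M *m w))); split; last first.
    by rewrite /rC [in LHS](complexE (inner w (M *m w))) (ger0_Im hb) mulr0 addr0.
  by move: (hb); rewrite [X in 0 <= X](complexE (inner w (M *m w))) (ger0_Im hb) mulr0 addr0 ler0c.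
suff: a = 0 by move=> a00; apply: inner_self_eq0; rewrite ea a00.
apply/eqP; rewrite eq_le a0 andbT; apply/negP => /negP; rewrite -ltNge => apos.
set s := a / (b + 1).
have spos : 0 < s by rewrite divr_gt0 // ltr_wpDl.
have := hpos (v - rC s *: w).
have -> : inner (v - rC s *: w) (M *m (v - rC s *: w)) = rC (s*s*b - 2*s*a).
  rewrite mulmxBr -scalemxAr innerBr !innerZr !innerBl !innerZl hv.
  rewrite (inner_conj v w hM) ea eb !rC_conj !rC_real.
  rewrite !rmorphB !rmorphM /= rmorphMn /=; ring.
rewrite rC_real ler0c => H.
have : s * (s * b - 2 * a) < 0.
  rewrite pmulr_rlt0 // subr_lt0 /s.
  rewrite mulrAC ltr_pdivrMr ?ltr_wpDl //.
  by nra.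
by nra.
Qed.

Lemma pure_quad (R : realType) d (psi v : 'cV[R[i]]_d) :
  `|inner v psi| ^+ 2 = inner v (pure_state psi *m v).
Proof.
rewrite normCK /pure_state -mulmxA /inner mulr_suml.
apply: eq_bigr => k _; rewrite !mxE big_ord1 mulrA; congr (_ * _).
rewrite !mxE rmorph_sum; apply: eq_bigr => l _.
by rewrite !mxE rmorphM /= conjCK mulrC.
Qed.

Lemma inner_e (R : realType) d (j : 'I_d) (v : 'cV[R[i]]_d) :
  inner (e_vec d j) v = v j 0.
Proof.
rewrite /inner (bigD1 j) //= big1 ?addr0 => [|k hk]; rewrite mxE.
  by rewrite eqxx rmorph1 mul1r.
by rewrite (_ : (k == j :> nat) = false) ?rmorph0 ?mul0r //; exact: negbTE hk.
Qed.

Lemma e_mul (R : realType) d (M : 'M[R[i]]_d) (k : 'I_d) :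
  M *m e_vec d k = col k M.
Proof.
apply/matrixP => i j; rewrite !mxE (bigD1 k) //= big1 ?addr0 => [|l hl]; rewrite mxE.
  by rewrite eqxx mulr1.
by rewrite (_ : (l == k :> nat) = false) ?mulr0 //; exact: negbTE hl.
Qed.

Lemma inner_e_e (R : realType) d (M : 'M[R[i]]_d) (j k : 'I_d) :
  inner (e_vec d j) (M *m e_vec d k) = M j k.
Proof. by rewrite e_mul inner_e mxE. Qed.

Lemma vnorm_neq0 (R : realType) d (u : 'cV[R[i]]_d) : u != 0 -> vnorm u != 0.
Proof.
move=> hu; rewrite /vnorm sqrtC_eq0; apply/eqP => h; move/eqP: hu; apply.
apply/matrixP => k l; rewrite (ord1 l) mxE.
have /psumr_eq0P H : forall i : 'I_d, true -> 0 <= `|u i 0| ^+ 2 by move=> i _; exact: exprn_ge0.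
by move/eqP: (H h k isT); rewrite sqrf_eq0 normr_eq0 => /eqP.
Qed.

Lemma meas (R : realType) d (rho : 'M[R[i]]_d) (psi u : 'cV[R[i]]_d) : u != 0 ->
  `|inner (normalize u) psi| ^+ 2 = inner (normalize u) (rho *m normalize u) ->
  inner u ((rho - pure_state psi) *m u) = 0.
Proof.
move=> hu; rewrite pure_quad /normalize -!scalemxAr !innerZr !innerZl => h.
have hc : ((vnorm u)^-1)^* * (vnorm u)^-1 != 0.
  by rewrite mulf_eq0 conjC_eq0 invr_eq0 (negbTE (vnorm_neq0 hu)).
rewrite mulmxBl innerBr; apply/eqP; rewrite subr_eq0; apply/eqP.
by apply: (mulfI hc); rewrite -!mulrA [in LHS]mulrCA [in RHS]mulrCA h.
Qed.

Definition uvec (R : realType) d (p : nat -> {poly R}) (a : nat -> R[i]) (t : R)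
  : 'cV[R[i]]_d := \col_(k < d) (a k * rC (p k).[t]).

Definition Pa (R : realType) d (p : nat -> {poly R}) (D : 'M[R[i]]_d)
  (a : nat -> R[i]) : {poly R[i]} :=
  \sum_(k < d) \sum_(l < d)
     ((a k)^* * D k l * a l) *: map_poly (real_complex R) (p k * p l).

Lemma Pa_horner (R : realType) d (p : nat -> {poly R}) (D : 'M[R[i]]_d) a t :
  (Pa p D a).[rC t] = inner (uvec d p a t) (D *m uvec d p a t).
Proof.
rewrite /Pa /inner horner_sum; apply: eq_bigr => k _.
rewrite horner_sum !mxE mulr_sumr; apply: eq_bigr => l _.
rewrite hornerZ rC_real horner_map /= !mxE hornerM rmorphM /=.
rewrite rmorphM /= -rC_real rC_conj !rC_real; ring.
Qed.

Lemma size_Pa (R : realType) d (p : nat -> {poly R}) (D : 'M[R[i]]_d) a :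
  (forall n, size (p n) = n.+1) -> (size (Pa p D a) <= (2 * d).-1)%N.
Proof.
move=> hs; rewrite /Pa; apply: (big_ind (fun q : {poly R[i]} => size q <= (2 * d).-1)%N).
- by rewrite size_poly0.
- by move=> q r hq hr; rewrite (leq_trans (size_add _ _)) // geq_max hq hr.
move=> k _; apply: (big_ind (fun q : {poly R[i]} => size q <= (2 * d).-1)%N).
- by rewrite size_poly0.
- by move=> q r hq hr; rewrite (leq_trans (size_add _ _)) // geq_max hq hr.
move=> l _; rewrite (leq_trans (size_scale_leq _ _)) // size_map_poly.
rewrite (leq_trans (size_mul_leq _ _)) // !hs.
have := ltn_ord k; have := ltn_ord l; move: (val k) (val l) => k' l'.
rewrite addSn /=; lia.
Qed.

Lemma coef_Pa (R : realType) d (p : nat -> {poly R}) (D : 'M[R[i]]_d) a N :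
  (Pa p D a)`_N = \sum_(k < d) \sum_(l < d)
     ((a k)^* * D k l * a l) * rC ((p k * p l)`_N).
Proof.
rewrite /Pa coef_sum; apply: eq_bigr => k _; rewrite coef_sum.
by apply: eq_bigr => l _; rewrite coefZ coef_map.
Qed.

Lemma roots_eq0 (F : idomainType) (q : {poly F}) (rs : seq F) :
  (size q <= size rs)%N -> all (root q) rs -> uniq rs -> q = 0.
Proof.
move=> hs hr hu; apply/eqP; apply/negPn/negP => hq.
by have := max_poly_roots hq hr hu; rewrite ltnNge hs.
Qed.
Lemma z_zero (R : realType) (z w : R[i]) : w \isn't Num.real ->
  z + z^* = 0 -> w * z + (w * z)^* = 0 -> z = 0.
Proof.
case: z => z1 z2; case: w => c s; rewrite complex_real => hs.
move=> /eqP; rewrite eq_complex /= => /andP[/eqP h1 _].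
move=> /eqP; rewrite eq_complex /= => /andP[/eqP h2 _].
have e1 : z1 = 0 by lra.
have : s * z2 = 0 by rewrite e1 mulr0 sub0r in h2; lra.
move/eqP; rewrite mulf_eq0 (negbTE hs) /= => /eqP e2.
by apply/eqP; rewrite eq_complex /= e1 e2 !eqxx.
Qed.

Lemma eiaD (R : realType) (alpha : R) (a b : nat) :
  eia alpha (a + b) = eia alpha a * eia alpha b.
Proof.
rewrite /eia natrD mulrDl cosD sinD; apply/eqP; rewrite eq_complex /=.
by apply/andP; split; apply/eqP; ring.
Qed.

Lemma eiaJ (R : realType) (alpha : R) (a : nat) :
  (eia alpha a)^* * eia alpha a = 1.
Proof.
rewrite /eia; apply/eqP; rewrite eq_complex /=.
apply/andP; split; apply/eqP; last by ring.
by rewrite -[RHS](cos2Dsin2 (a%:R * alpha)); ring.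
Qed.

Lemma eia0 (R : realType) (alpha : R) : eia alpha 0 = 1 :> R[i].
Proof. by rewrite /eia mul0r cos0 sin0. Qed.


Definition Iw (R : realType) (w : R -> R) (q : {poly R}) (c : R) : Prop :=
  (@lebesgue_measure R).-integrable [set: R] (fun x => (q.[x] * w x)%:E) /\
  (\int[@lebesgue_measure R]_(x in [set: R]) (q.[x] * w x)%:E = c%:E)%E.

Lemma Iw0 (R : realType) (w : R -> R) : Iw w 0 0.
Proof.
have E : (fun x => ((0 : {poly R}).[x] * w x)%:E) = cst 0%E.
  by apply/funext => x; rewrite horner0 mul0r.
by rewrite /Iw E; split; [exact: integrable0 | exact: integral0].
Qed.

Lemma IwD (R : realType) (w : R -> R) q r a b :
  Iw w q a -> Iw w r b -> Iw w (q + r) (a + b).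
Proof.
move=> [iq eq] [ir er].
have E : (fun x => ((q + r).[x] * w x)%:E) =
   (fun x => (q.[x] * w x)%:E + (r.[x] * w x)%:E)%E.
  by apply/funext => x; rewrite hornerD mulrDl EFinD.
rewrite /Iw E; split; first exact: integrableD.
by rewrite integralD // eq er.
Qed.

Lemma IwZ (R : realType) (w : R -> R) q a k :
  Iw w q a -> Iw w (k *: q) (k * a).
Proof.
move=> [iq eq].
have E : (fun x => ((k *: q).[x] * w x)%:E) =
   (fun x => k%:E * (q.[x] * w x)%:E)%E.
  by apply/funext => x; rewrite hornerZ -mulrA EFinM.
rewrite /Iw E; split; first exact: integrableZl.
by rewrite integralZl // eq EFinM.
Qed.

Lemma Iw_comb (R : realType) (w : R -> R) (p : nat -> {poly R}) (j : nat)
  (del : nat -> R) (a : nat -> R) N :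
  (forall k, Iw w (p j * p k) (del k)) ->
  Iw w (p j * \sum_(k < N) a k *: p k) (\sum_(k < N) a k * del k).
Proof.
move=> h; elim: N => [|N IH]; first by rewrite !big_ord0 mulr0; exact: Iw0.
rewrite !big_ord_recr /= mulrDr; apply: IwD => //.
by rewrite -scalerAr; apply: IwZ.
Qed.

Lemma span_p (R : realType) (p : nat -> {poly R}) :
  (forall n, size (p n) = n.+1) ->
  forall N (q : {poly R}), (size q <= N)%N ->
  exists a : nat -> R, q = \sum_(k < N) a k *: p k.
Proof.
move=> hs; elim=> [|N IH] q hq.
  by exists (fun _ => 0); rewrite big_ord0; apply/eqP; rewrite -size_poly_eq0 -leqn0.
have hlc : lead_coef (p N) != 0 by rewrite lead_coef_eq0 -size_poly_eq0 hs.
set c := q`_N / lead_coef (p N).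
have [a ha] : exists a : nat -> R, q - c *: p N = \sum_(k < N) a k *: p k.
  apply: IH; apply/leq_sizeP => j hj.
  rewrite coefB coefZ.
  have [->|hjN] := eqVneq j N.
    have -> : (p N)`_N = lead_coef (p N) by rewrite lead_coefE hs.
    by rewrite /c divfK // subrr.
  have hj' : (N < j)%N by rewrite ltn_neqAle eq_sym hjN hj.
  have h1 : q`_j = 0 by move/leq_sizeP: hq; apply.
  have h2 : (p N)`_j = 0 by move/leq_sizeP: (eq_leq (hs N)); apply.
  by rewrite h1 h2 mulr0 subr0.
exists (fun k => if k == N then c else a k).
rewrite big_ord_recr /= eqxx -[q](subrK (c *: p N)) ha; congr (_ + _).
by apply: eq_bigr => k _; rewrite (ltn_eqF (ltn_ord k)).
Qed.

Lemma Iw_uniq (R : realType) (w : R -> R) q a b : Iw w q a -> Iw w q b -> a = b.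
Proof. by move=> [_ ea] [_ eb]; move: ea; rewrite eb => -[]. Qed.

Lemma no_common_root (R : realType) (p : nat -> {poly R}) (z : R) n :
  orthonormal_polys p -> root (p n.+1) z -> root (p n) z -> False.
Proof.
move=> [hs [w [wpos horth]]] r1 r0.
have Ip : forall i j, Iw w (p j * p i) (i == j)%:R.
  move=> i j; have [hi he] := horth i j.
  have E : (fun x => ((p j * p i).[x] * w x)%:E) =
      (fun x => ((p j).[x] * (p i).[x] * w x)%:E).
    by apply/funext => x; rewrite hornerM.
  by rewrite /Iw E.
have hp0 : forall k, p k != 0 by move=> k; rewrite -size_poly_eq0 hs.
case/factor_theorem: r1 => A eA; case/factor_theorem: r0 => B eB.
have hA0 : A != 0 by apply: contra_neq (hp0 n.+1) => A0; rewrite eA A0 mul0r.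
have hB0 : B != 0 by apply: contra_neq (hp0 n) => B0; rewrite eB B0 mul0r.
have sA : size A = n.+1.
  by have := hs n.+1; rewrite eA size_Mmonic ?monicXsubC // size_XsubC addn2 => -[].
have sB : size B = n.
  by have := hs n; rewrite eB size_Mmonic ?monicXsubC // size_XsubC addn2 => -[].
have [a ea] := span_p hs (eq_leq sA).
have [b eb] := span_p hs (eq_leq sB).
have I1 := Iw_comb a (n.+1) (Ip^~ n).
have I2 := Iw_comb b n (Ip^~ n.+1).
rewrite -ea in I1; rewrite -eb in I2.
have EE : p n * A = p n.+1 * B by rewrite eA eB; ring.
rewrite EE in I1.
have := Iw_uniq I1 I2.
rewrite big_ord_recr /= eqxx mulr1 big1 ?add0r => [|k _]; last first.
  by rewrite (ltn_eqF (ltn_ord k)) mulr0.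
rewrite big1 => [an0|k _]; last by rewrite (ltn_eqF (ltn_trans (ltn_ord k) (ltnSn n))) mulr0.
have : lead_coef A != 0 by rewrite lead_coef_eq0.
rewrite lead_coefE sA /= ea coef_sum big_ord_recr /= coefZ an0 mul0r addr0.
rewrite big1 ?eqxx // => k _; rewrite coefZ.
have : (p k)`_n = 0.
  by move/leq_sizeP: (eq_leq (hs k)); apply; exact: ltn_ord.
by move=> ->; rewrite mulr0.
Qed.

Lemma pure_entry (R : realType) d (psi : 'cV[R[i]]_d) k l :
  pure_state psi k l = psi k 0 * (psi l 0)^*.
Proof. by rewrite /pure_state !mxE big_ord1 !mxE. Qed.

Lemma herm_entry (R : realType) d (M : 'M[R[i]]_d) k l :
  adj M = M -> M k l = (M l k)^*.
Proof. by move=> hM; rewrite -{1}hM !mxE. Qed.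

Lemma sum1_pick (R : realType) d (g : 'I_d -> R[i]) (j1 : 'I_d) :
  (forall l, l != j1 -> g l = 0) -> \sum_l g l = g j1.
Proof. by move=> hg; rewrite (bigD1 j1) //= big1 ?addr0. Qed.

Lemma sum2_pick (R : realType) d (f : 'I_d -> 'I_d -> R[i]) (i1 j1 : 'I_d) :
  i1 != j1 ->
  (forall k l, ~ (k = i1 /\ l = j1) -> ~ (k = j1 /\ l = i1) -> f k l = 0) ->
  \sum_k \sum_l f k l = f i1 j1 + f j1 i1.
Proof.
move=> hne hf.
have K : forall a b c e : 'I_d, a != b -> ~ (a = b /\ c = e).
  by move=> a b c e hab [E _]; rewrite E eqxx in hab.
have K2 : forall a b c e : 'I_d, c != e -> ~ (a = b /\ c = e).
  by move=> a b c e hab [_ E]; rewrite E eqxx in hab.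
rewrite (bigD1 i1) //=.
rewrite (@sum1_pick _ _ (f i1) j1) => [|l hl]; last first.
  by apply: hf; [apply: K2 | apply: K].
rewrite (bigD1 j1) /=; last by rewrite eq_sym.
rewrite (@sum1_pick _ _ (f j1) i1) => [|l hl]; last first.
  by apply: hf; [apply: K; rewrite eq_sym | apply: K2].
rewrite big1 ?addr0 // => k /andP[hk1 hk2].
by apply: big1 => l _; apply: hf; apply: K.
Qed.

Definition Jp (R : realType) d (rho : 'M[R[i]]_d) (psi : 'cV[R[i]]_d) (n : 'I_d) (m : nat) :=
  forall j k : 'I_d, (m <= k)%N -> rho j k * (psi n 0)^* = rho j n * (psi k 0)^*.

Lemma core (R : realType) d (p : nat -> {poly R}) (alpha : R)
  (rho : 'M[R[i]]_d) (psi : 'cV[R[i]]_d) :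
  (forall n, size (p n) = n.+1) ->
  (forall j, (0 < j < d)%N -> eia alpha j \isn't Num.real) ->
  adj rho = rho -> (forall u, 0 <= inner u (rho *m u)) ->
  (forall k : 'I_d, rho k k = psi k 0 * (psi k 0)^*) ->
  Pa p (rho - pure_state psi) (fun _ => 1) = 0 ->
  Pa p (rho - pure_state psi) (eia alpha) = 0 ->
  psi != 0 -> rho = pure_state psi.
Proof.
move=> hs hE hH hP hdiag P1 P2 hpsi.
have [i0 hi0] : exists i0 : 'I_d, psi i0 0 != 0.
  case: (pickP (fun i : 'I_d => psi i 0 != 0)) => [i hi|h]; first by exists i.
  move/eqP: hpsi; case; apply/matrixP => i j; rewrite (ord1 j) mxE.
  by move/negbFE/eqP: (h i).
pose n := [arg max_(i > i0 | psi i 0 != 0) (i : nat)].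
have [hn hmax] : psi n 0 != 0 /\ forall k : 'I_d, psi k 0 != 0 -> (k <= n)%N.
  by rewrite /n; case: arg_maxnP => //= i hi hm; split=> // k hk; exact: hm.
have hcn : (psi n 0)^* != 0 by rewrite conjC_eq0.
have hzero : forall k : 'I_d, (n < k)%N -> psi k 0 = 0.
  move=> k hk; apply/eqP; apply/negPn/negP => /hmax; rewrite leqNgt hk.
  by [].
have colz : forall k : 'I_d, psi k 0 = 0 -> forall j, rho j k = 0.
  move=> k hk j; have : rho *m e_vec d k = 0.
    by apply: psd_kernel => //; rewrite inner_e_e hdiag hk mul0r.
  by rewrite e_mul => /matrixP /(_ j 0); rewrite !mxE.
have rowz : forall k : 'I_d, psi k 0 = 0 -> forall j, rho k j = 0.
  by move=> k hk j; rewrite (herm_entry _ _ hH) colz // rmorph0.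
have Jent : forall m, Jp rho psi n m -> forall k l : 'I_d, (m <= k)%N -> (m <= l)%N ->
    rho k l = psi k 0 * (psi l 0)^*.
  move=> m hJ k l hk hl.
  have hnk : rho n k = psi n 0 * (psi k 0)^*.
    apply: (mulIf hcn); rewrite hJ // hdiag; ring.
  have := hJ k l hl; rewrite (herm_entry k n hH) hnk => e.
  by apply: (mulIf hcn); rewrite e rmorphM /= conjCK; ring.
have Jn : Jp rho psi n n.
  move=> j k hk; have [->|hkn] := eqVneq k n; first by [].
  have hlt : (n < k)%N by rewrite ltn_neqAle hk andbT; apply: contra_neq hkn => /val_inj.
  have pk : psi k 0 = 0 := hzero k hlt.
  by rewrite (colz k pk j) pk rmorph0 mul0r mulr0.
have step : forall m, (0 < m <= n)%N -> Jp rho psi n m -> Jp rho psi n m.-1.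
  move=> m /andP[m0 mn] hJ.
  have hnd := ltn_ord n.
  have hm1d : (m.-1 < d)%N by lia.
  pose m1 : 'I_d := Ordinal hm1d.
  pose Dl := rho - pure_state psi.
  have hD : forall k l, Dl k l = rho k l - psi k 0 * (psi l 0)^*.
    by move=> k l; rewrite /Dl !mxE big_ord1 !mxE.
  have Dherm : forall k l, Dl k l = (Dl l k)^*.
    move=> k l; rewrite !hD (herm_entry k l hH) rmorphB rmorphM /= conjCK; ring.
  have hm1n : m1 != n.
    by apply/eqP => /(congr1 val) /=; lia.
  have Dzero : forall k l : 'I_d, (n + m.-1 <= k + l)%N ->
      ~ (k = m1 /\ l = n) -> ~ (k = n /\ l = m1) -> Dl k l = 0.
    move=> k l hkl h1 h2; rewrite hD.
    case: (boolP (m <= k)%N) => hk; case: (boolP (m <= l)%N) => hl.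
    - by rewrite (Jent m hJ k l hk hl) subrr.
    - case: (boolP (n < k)%N) => hkn.
        by rewrite (rowz k (hzero k hkn)) (hzero k hkn) mul0r subrr.
      exfalso; apply: h2; split; apply: val_inj => /=; lia.
    - case: (boolP (n < l)%N) => hln.
        by rewrite (colz l (hzero l hln)) (hzero l hln) rmorph0 mulr0 subrr.
      exfalso; apply: h1; split; apply: val_inj => /=; lia.
    - exfalso; lia.
  have lcM : forall a b : nat, (p a * p b)`_(a + b) = lead_coef (p a) * lead_coef (p b).
    move=> a b; rewrite -lead_coefM lead_coefE size_mul ?hs //;
      last 2 first; try by rewrite -size_poly_eq0 hs.
    by congr (_ `_ _); rewrite addSn addnS.
  have coefs : forall a : nat -> R[i], (Pa p Dl a)`_(n + m.-1) =
      ((a m1)^* * Dl m1 n * a n + (a n)^* * Dl n m1 * a m1) *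
        rC (lead_coef (p m.-1) * lead_coef (p n)).
    move=> a; rewrite coef_Pa (sum2_pick hm1n).
      rewrite /= [(p n * _)]mulrC [(n + _)%N]addnC lcM; ring.
    move=> k l h1 h2.
    case: (ltnP (k + l)%N (n + m.-1)%N) => hkl.
      have : (p k * p l)`_(n + m.-1) = 0.
        apply: (leq_sizeP _ _ (size_mul_leq _ _)); rewrite !hs addSn /=; lia.
      by move=> ->; rewrite rC0 mulr0.

    by rewrite Dzero // mulr0 !mul0r.
  have L0 : rC (lead_coef (p m.-1) * lead_coef (p n)) != 0.
    by rewrite rC_eq0 mulf_neq0 // lead_coef_eq0 -size_poly_eq0 hs.
  have z0 : Dl m1 n = 0.
    have e1 := coefs (fun _ => 1); rewrite P1 coef0 in e1.
    have e2 := coefs (eia alpha); rewrite P2 coef0 in e2.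
    move/esym/eqP: e1; rewrite mulf_eq0 (negbTE L0) orbF => /eqP e1.
    move/esym/eqP: e2; rewrite mulf_eq0 (negbTE L0) orbF => /eqP e2.
    apply: (@z_zero _ _ (eia alpha (n - m.-1)%N)).
    - apply: hE; lia.
    - by rewrite -e1 rmorph1 !mul1r !mulr1 (Dherm n m1) addrC.
    - have En : eia alpha n = eia alpha m.-1 * eia alpha (n - m.-1)%N.
        by rewrite -eiaD subnKC //; lia.
      rewrite -[RHS]e2 En (Dherm n m1) /=.
      have J1 := eiaJ alpha m.-1.
      rewrite !rmorphM /=.
      set E1 := eia alpha m.-1; set W := eia alpha (n - m.-1)%N.
      set z := Dl m1 n.
      rewrite -[LHS]mul1r -J1 /E1; ring.
  have ent : rho m1 n = psi m1 0 * (psi n 0)^*.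
    by move: z0; rewrite hD => /eqP; rewrite subr_eq0 => /eqP.
  pose v := (psi n 0)^* *: e_vec d m1 - (psi m1 0)^* *: e_vec d n.
  have hv : inner v (rho *m v) = 0.
    rewrite /v mulmxBr -!scalemxAr !innerBr !innerBl !innerZr !innerZl !inner_e_e.
    rewrite ent (herm_entry n m1 hH) ent !hdiag !rmorphM /= !conjCK; ring.
  have := psd_kernel hH hP hv.
  rewrite /v mulmxBr -!scalemxAr !e_mul => /matrixP H.
  move=> j k hk; case: (eqVneq k m1) => [-> | hkm].
    have := H j 0; rewrite !mxE => /eqP; rewrite subr_eq0 => /eqP.
    by rewrite mulrC => ->; rewrite mulrC.
  apply: hJ; move: hk hkm; rewrite -val_eqE /=; lia.
have J0 : Jp rho psi n 0.
  have : forall i, (i <= n)%N -> Jp rho psi n (n - i)%N.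
    elim => [_|i IH hi]; first by rewrite subn0.
    have := step (n - i)%N _ (IH (ltnW hi)).
    rewrite (_ : (n - i).-1 = (n - i.+1)%N); last by lia.
    apply; lia.
  by move=> /(_ n (leqnn n)); rewrite subnn.
by apply/matrixP => k l; rewrite pure_entry; exact: (Jent 0%N J0).
Qed.

Lemma uvec_neq0 (R : realType) d (p : nat -> {poly R}) (a : nat -> R[i]) t :
  (0 < d)%N -> (forall n, size (p n) = n.+1) -> a 0%N != 0 -> uvec d p a t != 0.
Proof.
move=> d0 hs ha; apply/negP => /eqP /matrixP /(_ (Ordinal d0) 0); rewrite !mxE /=.
move/eqP; rewrite mulf_eq0 (negbTE ha) /= rC_eq0.
have /size1_polyC e : (size (p 0%N) <= 1)%N by rewrite hs.
rewrite e hornerC => /eqP c0.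
by have := hs 0%N; rewrite e c0 size_poly0.
Qed.

Lemma root_meas (R : realType) d (p : nat -> {poly R}) (rho : 'M[R[i]]_d)
  (psi u : 'cV[R[i]]_d) (a : nat -> R[i]) t :
  u = uvec d p a t -> u != 0 ->
  `|inner (normalize u) psi| ^+ 2 = inner (normalize u) (rho *m normalize u) ->
  root (Pa p (rho - pure_state psi) a) (rC t).
Proof. by move=> eu hu h; rewrite /root Pa_horner -eu (meas hu h). Qed.

Theorem theorem1 (R : realType) (d : nat) (p : nat -> {poly R})
  (x y : nat -> R) (alpha : R) :
  (0 < d)%N ->
  orthonormal_polys p ->
  (* x_0, ..., x_{d-1} are the distinct zeros of p_d *)
  (forall j, (j < d)%N -> root (p d) (x j)) ->
  (forall i j, (i < d)%N -> (j < d)%N -> x i = x j -> i = j) ->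
  (* y_0, ..., y_{d-2} are the distinct zeros of p_{d-1} *)
  (forall j, (j < d.-1)%N -> root (p d.-1) (y j)) ->
  (forall i j, (i < d.-1)%N -> (j < d.-1)%N -> y i = y j -> i = j) ->
  (forall j, (0 < j < d)%N -> eia alpha j \isn't Num.real) ->
  forall (psi : 'cV[R[i]]_d) (rho : 'M[R[i]]_d),
    inner psi psi = 1 ->
    density_matrix rho ->
    (forall j : 'I_d,
       let v := e_vec d j in `|inner v psi| ^+ 2 = inner v (rho *m v)) ->
    (forall j : 'I_d,
       let v := normalize (v1 d p x j) in `|inner v psi| ^+ 2 = inner v (rho *m v)) ->
    (forall j : 'I_d,
       let v := normalize (v2 d p alpha x j) in `|inner v psi| ^+ 2 = inner v (rho *m v)) ->
    (forall j : 'I_d,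
       let v := normalize (v3 d p y j) in `|inner v psi| ^+ 2 = inner v (rho *m v)) ->
    (forall j : 'I_d,
       let v := normalize (v4 d p alpha y j) in `|inner v psi| ^+ 2 = inner v (rho *m v)) ->
    rho = pure_state psi.
Proof.
move=> d0 hortho hx hxd hy hyd hE psi rho hpsi [hH [hP _]] H0 H1 H2 H3 H4.
have hs := hortho.1.
have hpsi0 : psi != 0.
  apply/eqP => e; move: hpsi; rewrite e /inner big1 => [|k _]; last by rewrite mxE mulr0.
  by move/esym/eqP; rewrite oner_eq0.
have hdiag : forall k : 'I_d, rho k k = psi k 0 * (psi k 0)^*.
  by move=> k; have := H0 k; rewrite /= inner_e inner_e_e normCK => <-.
have hd1 : d.-1.+1 = d by rewrite prednK.
pose rs := [seq rC (x j) | j <- iota 0 d] ++ [seq rC (y j) | j <- iota 0 d.-1].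
have hsz : size rs = (2 * d).-1 by rewrite size_cat !size_map !size_iota; lia.
have hu : uniq rs.
  rewrite cat_uniq; apply/and3P; split.
  - rewrite map_inj_in_uniq ?iota_uniq // => i j; rewrite !mem_iota /= => hi hj.
    by move=> /(congr1 (@complex.Re R)) /= /hxd; apply.
  - apply/hasPn => _ /mapP [j hj ->]; apply/negP => /mapP [i hi] /(congr1 (@complex.Re R)) /= e.
    move: hi hj; rewrite !mem_iota /= => hi hj.
    apply: (@no_common_root R p (x i) d.-1 hortho); first by rewrite hd1; apply: hx; lia.
    by rewrite -e; apply: hy; lia.
  - rewrite map_inj_in_uniq ?iota_uniq // => i j; rewrite !mem_iota /= => hi hj.
    by move=> /(congr1 (@complex.Re R)) /= /hyd; apply.
have hyroot : forall j, (j < d.-1)%N -> (p d.-1).[y j] = 0.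
  by move=> j hj; apply/eqP; apply: hy.
have Pzero : forall a : nat -> R[i], a 0%N != 0 ->
    (forall j : 'I_d, `|inner (normalize (uvec d p a (x j))) psi| ^+ 2 =
        inner (normalize (uvec d p a (x j))) (rho *m normalize (uvec d p a (x j)))) ->
    (forall j : 'I_d, (j < d.-1)%N -> `|inner (normalize (uvec d p a (y j))) psi| ^+ 2 =
        inner (normalize (uvec d p a (y j))) (rho *m normalize (uvec d p a (y j)))) ->
    Pa p (rho - pure_state psi) a = 0.
  move=> a ha hX hY; apply: (roots_eq0 (rs := rs)) => //.
  - by rewrite hsz size_Pa.
  rewrite all_cat; apply/andP; split; apply/allP => _ /mapP [j hj ->];
    move: hj; rewrite mem_iota /= => hj.
  - by apply: (root_meas (erefl _) (uvec_neq0 _ d0 hs ha) (hX (Ordinal hj))).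
  - have hj' : (j < d)%N by lia.
    exact: (root_meas (erefl _) (uvec_neq0 _ d0 hs ha) (hY (Ordinal hj') hj)).
apply: (core hs hE hH hP hdiag).
- apply: Pzero; first exact: oner_neq0.
  + move=> j; have := H1 j; rewrite /= (_ : v1 d p x j = uvec d p (fun=> 1) (x j)) //.
    by apply/matrixP => k l; rewrite !mxE mul1r.
  + move=> j hj; have := H3 j; rewrite /= (_ : v3 d p y j = uvec d p (fun=> 1) (y j)) //.
    rewrite /v3 hj; apply/matrixP => k l; rewrite !mxE mul1r.
    case: ifP => // /negbT; rewrite -leqNgt => hk.
    have -> : (k : nat) = d.-1 by have := ltn_ord k; lia.
    by rewrite hyroot.
- apply: Pzero; first by rewrite eia0 oner_neq0.
  + by move=> j; have := H2 j.
  + move=> j hj; have := H4 j; rewrite /= (_ : v4 d p alpha y j = uvec d p (eia alpha) (y j)) //.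
    rewrite /v4 hj; apply/matrixP => k l; rewrite !mxE.
    case: ifP => // /negbT; rewrite -leqNgt => hk.
    have -> : (k : nat) = d.-1 by have := ltn_ord k; lia.
    by rewrite hyroot ?rC0 ?mulr0.
- exact: hpsi0.
Qed.
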